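(* For every $x\in\mathcal X$ there exists $\mu_0(x)\ge 0$ such that for all $\mu\ge\mu_0(x)$, $D^\mu(x)=\mathbb 1\{T(x)\ge 1-\alpha\}$ and $C^\mu(x)\in\arg\max_{C\in\mathcal I}p_C(x)$; moreover, if several sets share this maximal value of $p_C(x)$, then $C^\mu(x)$ is one with the largest weight $w(C)$ among them.
   Context: Let $(X,Y)\sim P_{XY}$ on $\mathcal X\times\mathcal Y$, $\alpha\in(0,1)$. $\mathcal I$ is a finite collection of subsets of $\mathcal Y$ enumerated in a fixed lexicographic order, $w:\mathcal I\to(0,B)$ a bounded positive weight. For $C\in\mathcal I$ let $p_C(x)=\mathbb P(Y\in C\mid X=x)$, $\ell_{x,C}(\mu)=w(C)p_C(x)+\mu(p_C(x)-(1-\alpha))$ for $\mu\ge0$, $\mathcal U_x(\mu)=\max_{C\in\mathcal I}\ell_{x,C}(\mu)$. $C^\mu(x)$ is a maximizer of $\ell_{x,C}(\mu)$ over $C\in\mathcal I$, ties broken in favor of the largest $w(C)$ and then smallest index; $D^\mu(x)=\mathbb 1\{\mathcal U_x(\mu)\ge0\}$; $T(x)=\max_{C\in\mathcal I}p_C(x)$. *)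

(* Defs.v *)
From HB Require Import structures.
From mathcomp Require Import all_boot all_order all_algebra.
From mathcomp Require Import all_classical all_reals all_analysis.
Set Implicit Arguments. Unset Strict Implicit. Unset Printing Implicit Defensive.
Import Order.TTheory GRing.Theory Num.Theory.
Local Open Scope classical_set_scope.
Local Open Scope ring_scope.

(* The finite collection I = {C_0, ..., C_n} of subsets of Y is indexed by
   'I_n.+1 in its fixed (lexicographic) enumeration order; C : 'I_n.+1 -> set Y.
   k is a regular version of the conditional distribution of Y given X, so that
   p_C(x) = P(Y \in C | X = x) = k x C. *)

Section Defs.
Context {dx dy : measure_display} {X : measurableType dx} {Y : measurableType dy}
  {R : realType}.

Definition is_cond_law (P : probability (X * Y)%type R) (k : R.-pker X ~> Y) :=
  forall (A : set X) (B : set Y), measurable A -> measurable B ->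
    P (A `*` B) = (\int[P]_(z in A `*` [set: Y]) k z.1 B)%E.

Variables (k : R.-pker X ~> Y) (n : nat) (C : 'I_n.+1 -> set Y)
  (w : 'I_n.+1 -> R) (alpha : R).

Definition pC (x : X) (i : 'I_n.+1) : R := fine (k x (C i)).

Definition ell (x : X) (mu : R) (i : 'I_n.+1) : R :=
  w i * pC x i + mu * (pC x i - (1 - alpha)).

Definition Ux (x : X) (mu : R) : R :=
  \big[Num.max/ell x mu ord0]_(i < n.+1) ell x mu i.

Definition Tx (x : X) : R := \big[Num.max/pC x ord0]_(i < n.+1) pC x i.

Definition is_sel (x : X) (mu : R) (i : 'I_n.+1) : bool :=
  [forall j, (ell x mu j < ell x mu i) ||
    ((ell x mu j == ell x mu i) &&
      ((w j < w i) || ((w j == w i) && (i <= j)%N)))].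

Definition Cmu (x : X) (mu : R) : 'I_n.+1 := odflt ord0 [pick i | is_sel x mu i].

Definition Dmu (x : X) (mu : R) : bool := 0 <= Ux x mu.

End Defs.

(* Main.v *)
Require Import Defs.
From HB Require Import structures.
From mathcomp Require Import all_boot all_order all_algebra.
From mathcomp Require Import all_classical all_reals all_analysis.
From mathcomp Require Import ring lra.
Import Order.TTheory GRing.Theory Num.Theory.
Local Open Scope classical_set_scope.
Local Open Scope ring_scope.

Lemma sel_exists (R : realType) (n : nat) (F w : 'I_n.+1 -> R) :
  exists i : 'I_n.+1, [forall j, (F j < F i) ||
    ((F j == F i) && ((w j < w i) || ((w j == w i) && (i <= j)%N)))].
Proof.
case: (@arg_maxP _ _ _ ord0 xpredT F erefl) => i1 _ h1.
have P1 : (fun i => F i == F i1) i1 by [].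
case: (@arg_maxP _ _ _ i1 (fun i => F i == F i1) w P1) => i2 /eqP h2F h2.
have P2 : (fun i : 'I_n.+1 => (F i == F i1) && (w i == w i2)) i2.
  by rewrite h2F !eqxx.
case: (@arg_minnP _ i2 (fun i : 'I_n.+1 => (F i == F i1) && (w i == w i2))
   (fun i => nat_of_ord i) P2) => i3 /andP[/eqP h3F /eqP h3w] h3.
exists i3; apply/forallP => j.
have hj := h1 j isT.
rewrite h3F h3w.
case: (ltrP (F j) (F i1)) => [//|hj2] /=.
have eF : F j = F i1 by apply/le_anti/andP; split.
rewrite eF eqxx /=.
have hw := h2 j (introT eqP eF).
case: (ltrP (w j) (w i2)) => [//|hw2] /=.
have ew : w j = w i2 by apply/le_anti/andP; split.
rewrite ew eqxx /=.
apply: h3; by rewrite eF ew !eqxx.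
Qed.

Theorem proposition3 (dx dy : measure_display) (X : measurableType dx)
  (Y : measurableType dy) (R : realType)
  (P : probability (X * Y)%type R) (k : R.-pker X ~> Y)
  (hk : is_cond_law P k)
  (alpha : R) (halpha : 0 < alpha < 1)
  (n : nat) (C : 'I_n.+1 -> set Y) (hC : forall i, measurable (C i))
  (hCinj : injective C)
  (B : R) (w : 'I_n.+1 -> R) (hw : forall i, 0 < w i < B) :
  forall x : X, exists mu0 : R, 0 <= mu0 /\
    forall mu : R, mu0 <= mu ->
      [/\ Dmu k C w alpha x mu = (1 - alpha <= Tx k C x),
          (forall j, pC k C x j <= pC k C x (Cmu k C w alpha x mu)) &
          (forall j, pC k C x j = pC k C x (Cmu k C w alpha x mu) ->
                     w j <= w (Cmu k C w alpha x mu))].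
Proof.
move=> x.
set p := pC k C x.
have p0 : forall i, 0 <= p i by move=> i; apply: fine_ge0; exact: measure_ge0.
have wB : forall i, 0 < w i /\ w i < B by move=> i; case/andP: (hw i).
have B0 : 0 < B by case: (wB ord0) => ? ?; lra.
case: (@arg_maxP _ _ _ ord0 xpredT p erefl) => jm _ hjm'.
have hjm : forall j, p j <= p jm by move=> j; exact: hjm'.
set T := p jm.
have eT : Tx k C x = T.
  apply/le_anti; rewrite (le_bigmax _ p jm) andbT.
  by apply: bigmax_le => //; apply: hjm.
set g := fun i => if p i < T then B * p i / (T - p i) else 0.
set h := if T < 1 - alpha then B * T / ((1 - alpha) - T) + 1 else 0.
have g0 : forall i, 0 <= g i.
  move=> i; rewrite /g; case: ifP => // hi.
  apply: divr_ge0; [apply: mulr_ge0; [lra| exact: p0] | lra].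
have T0 : 0 <= T by exact: p0.
have h0 : 0 <= h.
  rewrite /h; case: ifP => // hi.
  have : 0 <= B * T / ((1 - alpha) - T).
    apply: divr_ge0; [apply: mulr_ge0; lra | lra].
  lra.
have sg0 : 0 <= \sum_i g i by apply: sumr_ge0 => i _; exact: g0.
have gle : forall i, g i <= \sum_i g i.
  move=> i; rewrite (bigD1 i) //= lerDl; apply: sumr_ge0 => j _; exact: g0.
exists (\sum_i g i + h); split; first lra.
move=> mu hmu.
have mu0 : 0 <= mu by lra.
have hsel : is_sel k C w alpha x mu (Cmu k C w alpha x mu).
  rewrite /Cmu; case: pickP => [i -> //|hn].
  case: (@sel_exists R n (ell k C w alpha x mu) w) => i hi.
  by move: (hn i); rewrite /is_sel hi.
set i := Cmu k C w alpha x mu.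
have hs : forall j, (ell k C w alpha x mu j < ell k C w alpha x mu i) ||
    ((ell k C w alpha x mu j == ell k C w alpha x mu i) &&
      ((w j < w i) || ((w j == w i) && (i <= j)%N))).
  by move=> j; move/forallP: hsel; apply.
have ellE : forall j, ell k C w alpha x mu j = w j * p j + mu * (p j - (1 - alpha)).
  by [].
have pi : p i = T.
  apply/le_anti; rewrite hjm /=; rewrite leNgt; apply/negP => hlt.
  have hg : g i = B * p i / (T - p i) by rewrite /g hlt.
  have hmg : B * p i / (T - p i) <= mu by rewrite -hg; have := gle i; lra.
  have hm2 : B * p i <= mu * (T - p i).
    rewrite -ler_pdivrMr; last lra. by [].
  have := hs jm; rewrite !ellE.
  have := wB jm; have := wB i; have := p0 i.
  move=> pi0 [wi0 wiB] [wj0 wjB].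
  have q1 : 0 < w jm * T by apply: mulr_gt0 => //; lra.
  have q2 : w i * p i <= B * p i by apply: ler_wpM2r => //; lra.
  have e : (w jm * p jm + mu * (p jm - (1 - alpha))) - (w i * p i + mu * (p i - (1 - alpha)))
     = w jm * T - w i * p i + mu * (T - p i) by rewrite /T; ring.
  case/orP => [| /andP[/eqP] ]; lra.
split.
- rewrite eT /Dmu.
  case: (lerP (1 - alpha) T) => hT.
  + apply: (le_trans _ (le_bigmax _ _ jm)); rewrite ellE -/T.
    have := wB jm => -[? ?].
    have : 0 <= w jm * T by apply: mulr_ge0; lra.
    have : 0 <= mu * (T - (1 - alpha)) by apply: mulr_ge0; lra.
    lra.
  + apply/negbTE; rewrite -ltNge.
    have hh : h = B * T / ((1 - alpha) - T) + 1 by rewrite /h hT.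
    have hm : B * T / ((1 - alpha) - T) + 1 <= mu by rewrite -hh; lra.
    have hm2 : B * T + ((1 - alpha) - T) <= mu * ((1 - alpha) - T).
      have : B * T / ((1 - alpha) - T) <= mu - 1 by lra.
      rewrite ler_pdivrMr; last lra. lra.
    have neg : forall j, ell k C w alpha x mu j < 0.
      move=> j; rewrite ellE.
      have := wB j => -[? ?].
      have hpj : p j <= T := hjm j.
      have hp0 := p0 j.
      have q1 : w j * p j <= B * T.
        apply: (le_trans (y := B * p j)); [apply: ler_wpM2r; lra | apply: ler_wpM2l; lra].
      have q2 : mu * (p j - (1 - alpha)) <= mu * (T - (1 - alpha)).
        by apply: ler_wpM2l => //; lra.
      have e : mu * (T - (1 - alpha)) = - (mu * ((1 - alpha) - T)) by ring.
      lra.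
    apply: bigmax_lt => //; exact: neg.
- by move=> j; rewrite -/i pi.
- move=> j; rewrite -/i => hpj.
  have := hs j; rewrite !ellE hpj.
  have := wB j; have := wB i; move=> [? ?] [? ?].
  case/orP => [hl | /andP[_ /orP[/ltW //|/andP[/eqP -> _]//]]].
  rewrite leNgt; apply/negP => hlt.
  have : 0 <= (w j - w i) * p i by apply: mulr_ge0; [lra | exact: p0].
  have e : (w j - w i) * p i = w j * p i - w i * p i by ring.
  lra.
Qed.
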